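(* Let $m,n$ be natural numbers and let $F_{ij}=\int_{-1}^{1}P_{i-1}(\eta)\,\eta^{j-1}\,d\eta$. For each natural $k$ let $\mathbf f_{k,\bullet}=(F_{k1},F_{k2},\dots,F_{k,n+1})^T$, and let $\mathbf f'=(F_{1,m+1},F_{1,m+2},\dots,F_{1,m+n+1})^T$. Then $\mathbf f'$ is a linear combination of the vectors $\mathbf f_{\delta,\bullet},\mathbf f_{\delta+2,\bullet},\dots,\mathbf f_{m+1,\bullet}$, where $\delta=1$ if $m$ is even and $\delta=2$ if $m$ is odd.
   Context: $P_k$ denotes the Legendre polynomial of degree $k$; $F=(F_{ij})$ is the matrix of moments of the Legendre polynomials. *)

(* Defs.v *)
From Stdlib Require Import Reals Lra Lia.
From Coquelicot Require Import Coquelicot.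
Open Scope R_scope.

(* Legendre polynomials via Bonnet's recurrence:
   P_0 = 1, P_1 = x, (k+1) P_{k+1} = (2k+1) x P_k - k P_{k-1}.
   legendre_pair k x = (P_k x, P_{k+1} x). *)
Fixpoint legendre_pair (k : nat) (x : R) : R * R :=
  match k with
  | O => (1, x)
  | S k' =>
      let (p, q) := legendre_pair k' x in
      (q, ((2 * INR k' + 3) * x * q - (INR k' + 1) * p) / (INR k' + 2))
  end.

Definition legendre (k : nat) (x : R) : R := fst (legendre_pair k x).

Definition Fmom (i j : nat) : R :=
  RInt (fun eta => legendre (i - 1) eta * eta ^ (j - 1)) (-1) 1.

Definition delta (m : nat) : nat := if Nat.even m then 1%nat else 2%nat.

(* Main.v *)
Require Import Defs.
From Stdlib Require Import Reals Lra Lia.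
From Coquelicot Require Import Coquelicot.
Open Scope R_scope.

Lemma legendre_S k x : legendre (S k) x = snd (legendre_pair k x).
Proof. unfold legendre; simpl; destruct (legendre_pair k x); reflexivity. Qed.

Lemma legendre_SS k x : legendre (S (S k)) x =
  ((2*INR k+3)*x*legendre (S k) x - (INR k+1)*legendre k x)/(INR k+2).
Proof.
  rewrite !legendre_S. unfold legendre. simpl.
  destruct (legendre_pair k x). reflexivity.
Qed.

Definition Sp (m : nat) (f : R -> R) : Prop :=
  exists c : nat -> R, forall x,
    f x = sum_f_R0 (fun t => c t * legendre (m mod 2 + 2*t) x) (m/2).

Lemma Sp_ext m f g : (forall x, f x = g x) -> Sp m f -> Sp m g.
Proof. intros H [c Hc]. exists c. intros x. rewrite <- H. apply Hc. Qed.

Lemma sum_zero (a : nat -> R) N : sum_f_R0 (fun t => 0 * a t) N = 0.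
Proof. induction N; simpl; [ring | rewrite IHN; ring]. Qed.

Lemma sum_plus' (a b : nat -> R) N :
  sum_f_R0 (fun t => a t + b t) N = sum_f_R0 a N + sum_f_R0 b N.
Proof. induction N; simpl; [ring | rewrite IHN; ring]. Qed.

Lemma sum_scal' (a : nat -> R) k N :
  sum_f_R0 (fun t => k * a t) N = k * sum_f_R0 a N.
Proof. induction N; simpl; [ring | rewrite IHN; ring]. Qed.

Lemma sum_ext' (a b : nat -> R) N :
  (forall t, (t <= N)%nat -> a t = b t) -> sum_f_R0 a N = sum_f_R0 b N.
Proof.
  induction N; intros H; simpl.
  - apply H; lia.
  - rewrite IHN by (intros; apply H; lia). rewrite H by lia. reflexivity.
Qed.

Lemma Sp_zero m : Sp m (fun _ => 0).
Proof. exists (fun _ => 0). intros x. rewrite sum_zero. reflexivity. Qed.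

Lemma Sp_plus m f g : Sp m f -> Sp m g -> Sp m (fun x => f x + g x).
Proof.
  intros [c Hc] [d Hd]. exists (fun t => c t + d t). intros x.
  rewrite Hc, Hd, <- sum_plus'. apply sum_ext'. intros; ring.
Qed.

Lemma Sp_scal m k f : Sp m f -> Sp m (fun x => k * f x).
Proof.
  intros [c Hc]. exists (fun t => k * c t). intros x.
  rewrite Hc, <- sum_scal'. apply sum_ext'. intros; ring.
Qed.

Lemma Sp_top m : Sp m (legendre m).
Proof.
  exists (fun t => if Nat.eqb t (m/2)%nat then 1 else 0). intros x.
  destruct (m/2)%nat eqn:E.
  - cbn [sum_f_R0 Nat.eqb]. replace (m mod 2 + 2 * 0)%nat with m.
    + ring.
    + pose proof (Nat.div_mod_eq m 2). lia.
  - rewrite tech5. rewrite Nat.eqb_refl.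
    rewrite (sum_ext' _ (fun t => 0 * legendre (m mod 2 + 2*t) x)).
    + rewrite sum_zero. assert (m mod 2 + 2 * S n = m)%nat.
      { pose proof (Nat.div_mod_eq m 2). lia. }
      rewrite H. ring.
    + intros t Ht. destruct (Nat.eqb_spec t (S n)); [lia | reflexivity].
Qed.

Lemma Sp_up2 m f : Sp m f -> Sp (m+2) f.
Proof.
  intros [c Hc].
  exists (fun t => if Nat.leb t (m/2)%nat then c t else 0). intros x.
  replace ((m+2) mod 2)%nat with (m mod 2)%nat.
  2:{ replace (m+2)%nat with (m + 1*2)%nat by lia. rewrite Nat.mod_add; lia. }
  replace ((m+2)/2)%nat with (S (m/2)).
  2:{ replace (m+2)%nat with (m + 1*2)%nat by lia. rewrite Nat.div_add; lia. }
  rewrite tech5. rewrite Hc.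
  replace (Nat.leb (S (m/2)) (m/2)) with false.
  2:{ symmetry. apply Nat.leb_gt. lia. }
  rewrite Rmult_0_l, Rplus_0_r. apply sum_ext'. intros t Ht.
  replace (Nat.leb t (m/2)) with true; [reflexivity|].
  symmetry; apply Nat.leb_le; lia.
Qed.

Lemma Sp_up m d f : Sp m f -> Sp (m + 2*d) f.
Proof.
  induction d; intros H.
  - replace (m + 2*0)%nat with m by lia. exact H.
  - replace (m + 2 * S d)%nat with ((m + 2*d) + 2)%nat by lia.
    apply Sp_up2. auto.
Qed.

Lemma Sp_mono k m d f : Sp k f -> m = (k + 2*d)%nat -> Sp m f.
Proof. intros H ->. apply Sp_up. exact H. Qed.

Lemma Sp_xP k : Sp (S k) (fun x => x * legendre k x).
Proof.
  destruct k as [|k].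
  - apply (Sp_ext _ (legendre 1)); [|apply Sp_top].
    intros x. unfold legendre. simpl. ring.
  - apply (Sp_ext _ (fun x => (INR k + 2)/(2*INR k+3) * legendre (S (S k)) x
                         + (INR k + 1)/(2*INR k+3) * legendre k x)).
    + intros x. rewrite legendre_SS. pose proof (pos_INR k). field. lra.
    + apply Sp_plus; apply Sp_scal; [apply Sp_top|].
      apply (Sp_mono k _ 1); [apply Sp_top | lia].
Qed.

Lemma Sp_sum M N (g : nat -> R -> R) :
  (forall t, (t <= N)%nat -> Sp M (g t)) ->
  Sp M (fun x => sum_f_R0 (fun t => g t x) N).
Proof.
  induction N; intros H.
  - simpl. apply H. lia.
  - simpl. apply Sp_plus.
    + apply IHN. intros; apply H; lia.
    + apply H; lia.
Qed.

Lemma Sp_xmul m f : Sp m f -> Sp (S m) (fun x => x * f x).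
Proof.
  intros [c Hc].
  apply (Sp_ext _ (fun x => sum_f_R0
      (fun t => c t * (x * legendre (m mod 2 + 2 * t) x)) (m/2))).
  { intros x. rewrite Hc, <- sum_scal'. apply sum_ext'. intros; ring. }
  apply Sp_sum. intros t Ht. apply Sp_scal.
  apply (Sp_mono _ _ (m/2 - t) _ (Sp_xP (m mod 2 + 2*t))).
  pose proof (Nat.div_mod_eq m 2). lia.
Qed.

Lemma Sp_pow m : Sp m (fun x => x ^ m).
Proof.
  induction m.
  - apply (Sp_ext _ (legendre 0)); [|apply Sp_top].
    intros x. reflexivity.
  - apply (Sp_ext _ (fun x => x * x ^ m)); [intros; reflexivity|].
    apply Sp_xmul. exact IHm.
Qed.

Lemma cont_mult (f g : R -> R) x :
  continuous f x -> continuous g x -> continuous (fun y => f y * g y) x.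
Proof. intros. apply (continuous_mult f g); auto. Qed.

Lemma cont_plus (f g : R -> R) x :
  continuous f x -> continuous g x -> continuous (fun y => f y + g y) x.
Proof. intros. apply (continuous_plus f g); auto. Qed.

Lemma cont_pair k x : continuous (legendre k) x /\ continuous (legendre (S k)) x.
Proof.
  induction k.
  - split.
    + apply (continuous_ext (fun _ => 1)); [intros; reflexivity|apply continuous_const].
    + apply (continuous_ext (fun y => y)); [intros; reflexivity|apply continuous_id].
  - destruct IHk as [H1 H2]. split; auto.
    apply (continuous_ext (fun y => ((2*INR k+3)*y*legendre (S k) y
               + (-(INR k+1))*legendre k y) * / (INR k+2))).
    { intros y. change (((2*INR k+3)*y*legendre (S k) y + (-(INR k+1))*legendre k y) * / (INR k+2) = legendre (S (S k)) y). rewrite legendre_SS. unfold Rdiv. ring. }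
    apply cont_mult; [|apply continuous_const].
    apply cont_plus; apply cont_mult; auto; try apply continuous_const.
    apply cont_mult; [apply continuous_const|apply continuous_id].
Qed.

Lemma cont_pow p x : continuous (fun y => y ^ p) x.
Proof.
  induction p.
  - apply continuous_const.
  - simpl. apply cont_mult; [apply continuous_id|exact IHp].
Qed.

Lemma exR k p : ex_RInt (fun y => legendre k y * y ^ p) (-1) 1.
Proof.
  apply (@ex_RInt_continuous R_CompleteNormedModule). intros z _.
  apply cont_mult; [apply cont_pair|apply cont_pow].
Qed.

Lemma RInt_scalR (f : R -> R) k : ex_RInt f (-1) 1 ->
  RInt (fun y => k * f y) (-1) 1 = k * RInt f (-1) 1.
Proof. intros H. exact (@RInt_scal R_CompleteNormedModule f (-1) 1 k H). Qed.
Lemma RInt_plusR (f g : R -> R) : ex_RInt f (-1) 1 -> ex_RInt g (-1) 1 ->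
  RInt (fun y => f y + g y) (-1) 1 = RInt f (-1) 1 + RInt g (-1) 1.
Proof. intros H1 H2. exact (@RInt_plus R_CompleteNormedModule f g (-1) 1 H1 H2). Qed.
Lemma ex_scalR (f : R -> R) k : ex_RInt f (-1) 1 -> ex_RInt (fun y => k * f y) (-1) 1.
Proof. intros H. exact (@ex_RInt_scal R_NormedModule f (-1) 1 k H). Qed.
Lemma ex_plusR (f g : R -> R) : ex_RInt f (-1) 1 -> ex_RInt g (-1) 1 ->
  ex_RInt (fun y => f y + g y) (-1) 1.
Proof. intros H1 H2. exact (@ex_RInt_plus R_NormedModule f g (-1) 1 H1 H2). Qed.

Lemma RInt_sum (c : nat -> R) (g : nat -> R -> R) N :
  (forall t, ex_RInt (g t) (-1) 1) ->
  RInt (fun y => sum_f_R0 (fun t => c t * g t y) N) (-1) 1 =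
  sum_f_R0 (fun t => c t * RInt (g t) (-1) 1) N.
Proof.
  intros Hg.
  assert (Ha : forall N, ex_RInt (fun y => sum_f_R0 (fun t => c t * g t y) N) (-1) 1).
  { induction N0; simpl.
    - apply ex_scalR; auto.
    - apply (ex_plusR (fun y => sum_f_R0 (fun t => c t * g t y) N0)
               (fun y => c (S N0) * g (S N0) y)); auto. apply ex_scalR; auto. }
  induction N.
  - simpl. apply RInt_scalR. auto.
  - simpl. rewrite <- IHN. rewrite <- RInt_scalR by auto.
    apply (RInt_plusR (fun y => sum_f_R0 (fun t => c t * g t y) N)
             (fun y => c (S N) * g (S N) y)); auto. apply ex_scalR; auto.
Qed.

Theorem lemma3 (m n : nat) :
  exists c : nat -> R,
    forall j : nat, (1 <= j <= n + 1)%nat ->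
      Fmom 1 (m + j) =
      sum_f_R0 (fun t => c t * Fmom (delta m + 2 * t) j)
               ((m + 1 - delta m) / 2).
Proof.
  destruct (Sp_pow m) as [c Hc]. exists c. intros j Hj.
  assert (Hd : (delta m = 1 + m mod 2)%nat).
  { unfold delta. destruct (Nat.even m) eqn:E.
    - apply Nat.even_spec in E. destruct E as [k ->].
      rewrite Nat.mul_comm, Nat.mod_mul; lia.
    - assert (Nat.odd m = true) by (unfold Nat.odd; rewrite E; reflexivity).
      apply Nat.odd_spec in H. destruct H as [k ->].
      replace (2*k+1)%nat with (1 + k*2)%nat by lia.
      rewrite Nat.mod_add by lia. reflexivity. }
  replace ((m + 1 - delta m) / 2)%nat with (m/2)%nat.
  2:{ rewrite Hd. pose proof (Nat.div_mod_eq m 2).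
      replace (m + 1 - (1 + m mod 2))%nat with (2 * (m/2))%nat by lia.
      rewrite Nat.mul_comm, Nat.div_mul; lia. }
  unfold Fmom.
  rewrite (RInt_ext _ (fun y => sum_f_R0 (fun t => c t *
       (legendre (m mod 2 + 2*t) y * y ^ (j-1))) (m/2))).
  2:{ intros y _. replace (m + j - 1)%nat with (m + (j-1))%nat by lia.
      rewrite pow_add, Hc. simpl (legendre (1-1) y).
      unfold legendre at 1. simpl. rewrite Rmult_1_l.
      rewrite Rmult_comm, <- sum_scal'. apply sum_ext'. intros; ring. }
  rewrite (RInt_sum c (fun t y => legendre (m mod 2 + 2*t) y * y ^ (j-1))).
  2:{ intros; apply exR. }
  apply sum_ext'. intros t _. rewrite Hd.
  replace (1 + m mod 2 + 2 * t - 1)%nat with (m mod 2 + 2*t)%nat by lia.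
  reflexivity.
Qed.
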